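(* Let $G$ be a $B_2$-EPG graph given with a representation, let $a$ be a row, and let $Y$ be a nonempty set of vertices whose indices all contain $a$. Suppose the projection graph of $Y$ on $a$ is a clique. Then there is a proper typed interval $t$ on row $a$ such that: (1) every vertex of $Y$ contains $t$; (2) for every vertex $u$ whose index is $\{a\}$ or $\{a,c\}$ where the row $c$ is not in the index of any vertex of $Y$, $u$ is adjacent to every vertex of $Y$ if and only if $u$ intersects $t$.
   Context: A graph $G$ is a $B_k$-EPG graph if each vertex $u$ can be assigned a path $P_u$ in the planar orthogonal grid with at most $k$ bends such that $uv\in E(G)$ iff $P_u$ and $P_v$ share at least one grid edge (a representation); for $B_2$-EPG graphs one assumes w.l.o.g. every path has exactly two bends. A vertex $u$ intersects a row if $P_u$ contains a grid edge of that row; the index of $u$ is the set of rows it intersects. If $a$ is in the index of $u$, $P_u^a$ is the segment of row $a$ between the two points of row $a$ where $P_u$ stops or bends. Types: $\emptyset$, $\mathsf d$, $\mathsf u$. A typed interval on row $a$ is $[x\alpha, y\beta]$ with $\alpha\le\beta$ points of row $a$ and $x,y$ types; it is proper if $\alpha\neq\beta$, or $\alpha=\beta$, $x=y$ and $x\in\{\mathsf u,\mathsf d\}$. For typed intervals $t=[x\alpha,y\beta]$, $t'=[x'\alpha',y'\beta']$ on row $a$ and an endpoint $z\gamma\in\{x'\alpha',y'\beta'\}$ of $t'$, $t$ is coherent with $z\gamma$ if (i) $\gamma\in(\alpha,\beta)$ (open interval), or (ii) $z=\emptyset$ and $[\alpha,\beta]$ contains the grid edge of $[\alpha',\beta']$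 incident to $\gamma$, or (iii) $z\neq\emptyset$ and $z\gamma\in\{x\alpha,y\beta\}$. $t$ contains $t'$ if $[\alpha',\beta']\subseteq[\alpha,\beta]$ and $t$ is coherent with both endpoints of $t'$. $t$ intersects $t'$ if $[\alpha,\beta]\cap[\alpha',\beta']$ contains a grid edge, or $t$ is coherent with an endpoint of $t'$, or $t'$ is coherent with an endpoint of $t$. The t-projection of $u$ on $a$ is $[x\alpha,y\beta]$ where $\alpha,\beta$ are the endpoints of $P_u^a$ and the type of an endpoint $\gamma$ is $\emptyset$ if $P_u$ ends at $\gamma$, $\mathsf d$ if $P_u$ bends downwards at $\gamma$, $\mathsf u$ if upwards. A vertex contains (intersects) a typed interval $t$ on $a$ if its t-projection on $a$ contains (intersects) $t$. The projection graph of a set $Y$ of vertices whose indices contain $a$ is the graph on $Y$ in which $u,v$ are adjacent iff their t-projections on $a$ intersect. *)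

(* Defs.v *)
From mathcomp Require Import all_boot.
From Stdlib Require Import ZArith.

Set Implicit Arguments.
Unset Strict Implicit.
Unset Printing Implicit Defensive.

(* Grid points (x, y) in Z x Z; rows are the horizontal lines y = a.
   "Up" means increasing y. *)
Definition gpoint := (Z * Z)%type.

(* Unit grid edges: HE x y joins (x,y)-(x+1,y); VE x y joins (x,y)-(x,y+1). *)
Inductive gedge := HE (x y : Z) | VE (x y : Z).

(* A path with exactly two bends: corner points q0 q1 q2 q3 (q0, q3 the ends,
   q1, q2 the bends). *)
Record path2 := Path2 { q0 : gpoint; q1 : gpoint; q2 : gpoint; q3 : gpoint }.

Definition seg_ok (p q : gpoint) : Prop :=
  p <> q /\ (fst p = fst q \/ snd p = snd q).

Definition seg_horiz (p q : gpoint) : Prop := snd p = snd q.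

Definition two_bends (P : path2) : Prop :=
  seg_ok (q0 P) (q1 P) /\ seg_ok (q1 P) (q2 P) /\ seg_ok (q2 P) (q3 P) /\
  (seg_horiz (q0 P) (q1 P) <-> ~ seg_horiz (q1 P) (q2 P)) /\
  (seg_horiz (q1 P) (q2 P) <-> ~ seg_horiz (q2 P) (q3 P)).

Definition seg_has (p q : gpoint) (e : gedge) : Prop :=
  match e with
  | HE x y => snd p = y /\ snd q = y /\
              (Z.min (fst p) (fst q) <= x)%Z /\ (x + 1 <= Z.max (fst p) (fst q))%Z
  | VE x y => fst p = x /\ fst q = x /\
              (Z.min (snd p) (snd q) <= y)%Z /\ (y + 1 <= Z.max (snd p) (snd q))%Z
  end.

Definition path_has (P : path2) (e : gedge) : Prop :=
  seg_has (q0 P) (q1 P) e \/ seg_has (q1 P) (q2 P) e \/ seg_has (q2 P) (q3 P) e.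

Definition adjacent (V : Type) (R : V -> path2) (u v : V) : Prop :=
  u <> v /\ exists e, path_has (R u) e /\ path_has (R v) e.

Definition in_index (P : path2) (a : Z) : Prop := exists x, path_has P (HE x a).

Inductive ttype := Tnone | Td | Tu.

(* [xl al, xr ar] *)
Record tint := TI { xl : ttype; al : Z; xr : ttype; ar : Z }.

Definition ti_wf (t : tint) : Prop := (al t <= ar t)%Z.

Definition ti_proper (t : tint) : Prop :=
  al t <> ar t \/ (al t = ar t /\ xl t = xr t /\ xl t <> Tnone).

(* t coherent with an endpoint z gamma of another interval, where [k,k+1]
   (if any) is the grid edge of that other interval incident to gamma *)
Definition coh_pt (t : tint) (z : ttype) (g : Z) (k : option Z) : Prop :=
  (al t < g < ar t)%Z \/
  (z = Tnone /\ exists k0, k = Some k0 /\ (al t <= k0)%Z /\ (k0 + 1 <= ar t)%Z) \/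
  (z <> Tnone /\ ((z = xl t /\ g = al t) \/ (z = xr t /\ g = ar t))).

Definition left_edge (t' : tint) : option Z :=
  if (al t' <? ar t')%Z then Some (al t') else None.
Definition right_edge (t' : tint) : option Z :=
  if (al t' <? ar t')%Z then Some (ar t' - 1)%Z else None.

Definition coh_left (t t' : tint) : Prop := coh_pt t (xl t') (al t') (left_edge t').
Definition coh_right (t t' : tint) : Prop := coh_pt t (xr t') (ar t') (right_edge t').

Definition ti_contains (t t' : tint) : Prop :=
  (al t <= al t')%Z /\ (ar t' <= ar t)%Z /\ coh_left t t' /\ coh_right t t'.

Definition ti_intersects (t t' : tint) : Prop :=
  (exists k, (al t <= k)%Z /\ (k + 1 <= ar t)%Z /\ (al t' <= k)%Z /\ (k + 1 <= ar t')%Z)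
  \/ coh_left t t' \/ coh_right t t' \/ coh_left t' t \/ coh_right t' t.

(* type of a bend at point b whose vertical segment goes to point o *)
Definition vdir (b o : gpoint) : ttype := if (snd b <? snd o)%Z then Tu else Td.

Definition mk_ti (x1 : ttype) (p1 : Z) (x2 : ttype) (p2 : Z) : tint :=
  if (p1 <=? p2)%Z then TI x1 p1 x2 p2 else TI x2 p2 x1 p1.

Definition on_row (p q : gpoint) (a : Z) : bool := ((snd p =? a) && (snd q =? a))%Z.

(* t-projection of a (two-bend) path P on row a; meaningful when a is in the
   index of P (then exactly one of the three segments is horizontal on row a). *)
Definition tproj (P : path2) (a : Z) : tint :=
  if on_row (q0 P) (q1 P) a then
    mk_ti Tnone (fst (q0 P)) (vdir (q1 P) (q2 P)) (fst (q1 P))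
  else if on_row (q1 P) (q2 P) a then
    mk_ti (vdir (q1 P) (q0 P)) (fst (q1 P)) (vdir (q2 P) (q3 P)) (fst (q2 P))
  else
    mk_ti (vdir (q2 P) (q1 P)) (fst (q2 P)) Tnone (fst (q3 P)).

(* Main.v *)
Require Import Defs.
From mathcomp Require Import all_boot.
From Stdlib Require Import ZArith Lia Setoid Classical.
Open Scope Z_scope.
Set Implicit Arguments.
Unset Strict Implicit.

Definition side_ok (z : ttype) (a y : Z) : Prop :=
  match z with Tu => a <= y | Td => y + 1 <= a | Tnone => False end.
Definition vedge (z : ttype) (g a : Z) : gedge :=
  match z with Tu => VE g a | Td => VE g (a - 1) | Tnone => HE g a end.

Lemma two_bends_arith x0 y0 x1 y1 x2 y2 x3 y3 :
  two_bends (Path2 (x0,y0) (x1,y1) (x2,y2) (x3,y3)) ->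
  ((x0 <> x1 \/ y0 <> y1) /\ (x0 = x1 \/ y0 = y1)) /\
  ((x1 <> x2 \/ y1 <> y2) /\ (x1 = x2 \/ y1 = y2)) /\
  ((x2 <> x3 \/ y2 <> y3) /\ (x2 = x3 \/ y2 = y3)) /\
  (y0 = y1 -> y1 <> y2) /\ (y1 <> y2 -> y0 = y1) /\
  (y1 = y2 -> y2 <> y3) /\ (y2 <> y3 -> y1 = y2).
Proof.
  rewrite /two_bends /seg_ok /seg_horiz /=.
  move=> [[H1 H1'] [[H2 H2'] [[H3 H3'] [[H4 H4'] [H5 H5']]]]].
  have ne : forall p q r s : Z, (p, q) <> (r, s) -> p <> r \/ q <> s.
    move=> p q r s H; case: (Z.eq_dec p r) => [E|]; last by left.
    by right=> E'; apply: H; rewrite E E'.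
  split; first by split; [apply: ne|].
  split; first by split; [apply: ne|].
  split; first by split; [apply: ne|].
  split; first by [].
  split; first by [].
  split; first by [].
  by [].
Qed.


Lemma two_bends_cases x0 y0 x1 y1 x2 y2 x3 y3 :
  two_bends (Path2 (x0,y0) (x1,y1) (x2,y2) (x3,y3)) ->
  (y1 = y0 /\ x2 = x1 /\ y3 = y2 /\ y0 <> y2 /\ x0 <> x1 /\ x1 <> x3) \/
  (x1 = x0 /\ y2 = y1 /\ x3 = x2 /\ y0 <> y1 /\ x0 <> x2 /\ y1 <> y3).
Proof.
  move/two_bends_arith=> [[A1 A2] [[B1 B2] [[C1 C2] [D1 [D2 [D3 D4]]]]]].
  case: (Z.eq_dec y0 y1) => e.
  - have h1 := D1 e. have h2 : y2 = y3.
      case: (Z.eq_dec y2 y3) => // f; exfalso; apply: h1; exact: D4.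
    left; case: B2 => // ?; case: C1; case: A1; try lia.
  - have h1 : y1 = y2 by case: (Z.eq_dec y1 y2) => // f; exfalso; apply: e; exact: D2.
    have h2 := D3 h1.
    right; case: A2 => // ?; case: C2 => // ?; case: B1; lia.
Qed.

Ltac split_ifs :=
  repeat match goal with
  | |- context [if ?b then _ else _] =>
      let E := fresh "E" in destruct b eqn:E;
      rewrite ?Bool.andb_true_iff ?Bool.andb_false_iff ?Z.eqb_eq ?Z.eqb_neq ?Z.leb_le ?Z.leb_gt ?Z.ltb_lt ?Z.ltb_ge in E
  end.

Lemma tproj_spec P a : two_bends P -> in_index P a ->
  (al (tproj P a) < ar (tproj P a)) /\
  (forall k, path_has P (HE k a) <-> (al (tproj P a) <= k /\ k + 1 <= ar (tproj P a))) /\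
  (forall x y, path_has P (VE x y) ->
     (x = al (tproj P a) /\ side_ok (xl (tproj P a)) a y) \/
     (x = ar (tproj P a) /\ side_ok (xr (tproj P a)) a y)) /\
  (xl (tproj P a) <> Tnone -> path_has P (vedge (xl (tproj P a)) (al (tproj P a)) a)) /\
  (xr (tproj P a) <> Tnone -> path_has P (vedge (xr (tproj P a)) (ar (tproj P a)) a)).
Proof.
  case: P => [[x0 y0] [x1 y1] [x2 y2] [x3 y3]] /two_bends_cases HB [w Hw].
  move: Hw; rewrite /tproj /on_row /mk_ti /vdir /path_has /seg_has /= => Hw.
  case: HB => [[? [? [? [? [? ?]]]]] | [? [? [? [? [? ?]]]]]]; subst.
  - have : a = y0 \/ a = y2 by lia.
    case=> ?; subst; split_ifs; try lia; cbn [al ar xl xr side_ok vedge].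
    all: try (split; [lia|split; [move=> k; split; lia|split; [move=> x y; lia|split; move=> Hn; first [congruence | lia]]]]).
  - have ? : a = y1 by lia.
    subst; split_ifs; try lia; cbn [al ar xl xr side_ok vedge].
    all: try (split; [lia|split; [move=> k; split; lia|split; [move=> x y; lia|split; move=> Hn; first [congruence | lia]]]]).
Qed.

Definition c (z : ttype) : Z := match z with Tnone => 0 | Td => 1 | Tu => 2 end.
Lemma ceq (z w : ttype) : z = w <-> c z = c w.
Proof. by case: z; case: w. Qed.
Lemma c_bnd z : 0 <= c z <= 2. Proof. case: z => /=; lia. Qed.

Definition CS (t : tint) (z g k : Z) : Prop :=
  al t < g < ar t \/ (z = 0 /\ al t <= k /\ k + 1 <= ar t) \/
  (z <> 0 /\ ((z = c (xl t) /\ g = al t) \/ (z = c (xr t) /\ g = ar t))).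
Definition CN (t : tint) (z g : Z) : Prop :=
  al t < g < ar t \/
  (z <> 0 /\ ((z = c (xl t) /\ g = al t) \/ (z = c (xr t) /\ g = ar t))).

Lemma some_ex (x : Z) (P : Z -> Prop) : (exists k0, Some x = Some k0 /\ P k0) <-> P x.
Proof. split; [by case=> k [[<-]] | by exists x]. Qed.
Lemma none_ex (P : Z -> Prop) : (exists k0, (None : option Z) = Some k0 /\ P k0) <-> False.
Proof. by split=> // [[k [] ]]. Qed.
Lemma ov_ex A B C D : (exists k, A <= k /\ k + 1 <= B /\ C <= k /\ k + 1 <= D) <->
  (A < B /\ C < D /\ A < D /\ C < B).
Proof. split; [case=> k; lia| move=> H; exists (Z.max A C); lia]. Qed.

Lemma le_pos t : al t < ar t -> left_edge t = Some (al t).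
Proof. by rewrite /left_edge => /Z.ltb_lt ->. Qed.
Lemma re_pos t : al t < ar t -> right_edge t = Some (ar t - 1).
Proof. by rewrite /right_edge => /Z.ltb_lt ->. Qed.
Lemma le_0 t : al t = ar t -> left_edge t = None.
Proof. by rewrite /left_edge => ->; rewrite Z.ltb_irrefl. Qed.
Lemma re_0 t : al t = ar t -> right_edge t = None.
Proof. by rewrite /right_edge => ->; rewrite Z.ltb_irrefl. Qed.

Lemma coh_some t z g k : coh_pt t z g (Some k) <-> CS t (c z) g k.
Proof.
  rewrite /coh_pt /CS some_ex; setoid_rewrite ceq; rewrite /=. lia.
Qed.
Lemma coh_none t z g : coh_pt t z g None <-> CN t (c z) g.
Proof.
  rewrite /coh_pt /CN none_ex; setoid_rewrite ceq; rewrite /=. lia.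
Qed.

Lemma inter_nf s t : al s < ar s -> al t < ar t ->
  ti_intersects s t <->
  (al s < ar s /\ al t < ar t /\ al s < ar t /\ al t < ar s) \/
  CS s (c (xl t)) (al t) (al t) \/ CS s (c (xr t)) (ar t) (ar t - 1) \/
  CS t (c (xl s)) (al s) (al s) \/ CS t (c (xr s)) (ar s) (ar s - 1).
Proof.
  move=> hs ht; rewrite /ti_intersects /coh_left /coh_right ov_ex
    (le_pos hs) (re_pos hs) (le_pos ht) (re_pos ht) !coh_some; tauto.
Qed.

Lemma inter_nf0 s t : al s < ar s -> al t = ar t ->
  ti_intersects s t <->
  CN s (c (xl t)) (al t) \/ CN s (c (xr t)) (ar t) \/
  CS t (c (xl s)) (al s) (al s) \/ CS t (c (xr s)) (ar s) (ar s - 1).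
Proof.
  move=> hs ht; rewrite /ti_intersects /coh_left /coh_right ov_ex
    (le_pos hs) (re_pos hs) (le_0 ht) (re_0 ht) !coh_some !coh_none; split; [case; [lia|tauto]|tauto].
Qed.

Lemma cont_nf y t : al t < ar t ->
  ti_contains y t <-> al y <= al t /\ ar t <= ar y /\
    CS y (c (xl t)) (al t) (al t) /\ CS y (c (xr t)) (ar t) (ar t - 1).
Proof.
  move=> ht; rewrite /ti_contains /coh_left /coh_right (le_pos ht) (re_pos ht) !coh_some; tauto.
Qed.
Lemma cont_nf0 y t : al t = ar t ->
  ti_contains y t <-> al y <= al t /\ ar t <= ar y /\
    CN y (c (xl t)) (al t) /\ CN y (c (xr t)) (ar t).
Proof.
  move=> ht; rewrite /ti_contains /coh_left /coh_right (le_0 ht) (re_0 ht) !coh_none; tauto.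
Qed.

Lemma seq_max (V : eqType) (f : V -> Z) (s : seq V) : s <> [::] ->
  exists y, y \in s /\ forall y', y' \in s -> f y' <= f y.
Proof.
  elim: s => // x s IH _.
  case: s IH => [|x' s] IH.
    by exists x; split; [rewrite inE eqxx | move=> y'; rewrite inE => /eqP ->; lia].
  have [y [hy hm]] := IH ltac:(done).
  case: (Z.le_gt_cases (f x) (f y)) => h.
  - exists y; split; first by rewrite inE hy orbT.
    move=> y'; rewrite inE => /orP [/eqP ->|]; [lia|exact: hm].
  - exists x; split; first by rewrite inE eqxx.
    move=> y'; rewrite inE => /orP [/eqP ->|/hm]; lia.
Qed.

Lemma set_max (V : finType) (Y : {set V}) (f : V -> Z) : Y != set0 ->
  exists y, y \in Y /\ forall y', y' \in Y -> f y' <= f y.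
Proof.
  case/set0Pn=> x hx.
  have : enum Y <> [::].
    by move=> E; rewrite -mem_enum E in hx.
  move/(seq_max f) => [y [hy hm]]; exists y; split; first by rewrite -mem_enum.
  by move=> y' hy'; apply: hm; rewrite mem_enum.
Qed.

Lemma pick_type (V : Type) (P : V -> Prop) (f : V -> ttype) y0 : P y0 ->
  exists x, (forall y, P y -> x <> Tnone -> f y = x) /\
    (forall z, z <> Tnone -> z <> x -> exists y, P y /\ f y <> z).
Proof.
  move=> h0; case: (classic (forall y, P y -> f y = f y0)) => H.
  - exists (f y0); split; first by move=> y hy _; exact: H.
    by move=> z _ hz; exists y0; split=> // e; apply: hz; rewrite e.
  - exists Tnone; split; first by [].
    move=> z hz _; case: (not_all_ex_not _ _ H) => y1 hy1.
    have [p1 n1] : P y1 /\ f y1 <> f y0 by tauto.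
    case: (classic (f y0 = z)) => e.
    + by exists y1; rewrite -e.
    + by exists y0; split.
Qed.

Lemma pick_type2 (V : Type) (P : V -> Prop) (f : V -> ttype) y0 : P y0 ->
  exists x, (forall y, P y -> x <> Tnone -> f y = x) /\
    (forall z, exists y, P y /\ (z <> Tnone -> z <> x -> f y <> z)).
Proof.
  move=> h0; have [x [h1 h2]] := pick_type f h0; exists x; split => // z.
  case: (classic (z <> Tnone /\ z <> x)) => [[hz hx]|hn].
  - by have [y [hy hf]] := h2 z hz hx; exists y.
  - exists y0; split => // hz hx; exfalso; tauto.
Qed.


Ltac sg := match goal with
 | |- _ \/ _ => first [left; sg | right; sg]
 | |- _ /\ _ => split; sg
 | _ => lia
end.
Ltac dh := repeat match goal with
 | H : _ \/ _ |- _ => destruct H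
 | H : _ /\ _ |- _ => destruct H
 end.

Lemma cne (z w : ttype) : z <> w <-> c z <> c w.
Proof. by rewrite ceq. Qed.

Lemma touch_right s y : al s < ar s -> al y < ar y -> ti_intersects s y ->
  ar s <= al y -> ar s = al y /\ c (xr s) = c (xl y) /\ c (xr s) <> 0.
Proof. move=> hs hy; rewrite (inter_nf hs hy) /CS => h h'; dh; lia. Qed.
Lemma touch_left s y : al s < ar s -> al y < ar y -> ti_intersects s y ->
  ar y <= al s -> al s = ar y /\ c (xl s) = c (xr y) /\ c (xl s) <> 0.
Proof. move=> hs hy; rewrite (inter_nf hs hy) /CS => h h'; dh; lia. Qed.

Lemma helly (V : finType) (Y : {set V}) (T : V -> tint)
  (hY : Y != set0) (hpos : forall y, y \in Y -> al (T y) < ar (T y))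
  (hcl : forall y y', y \in Y -> y' \in Y -> y <> y' -> ti_intersects (T y) (T y')) :
  exists t, ti_wf t /\ ti_proper t /\ (forall y, y \in Y -> ti_contains (T y) t) /\
   (forall s, al s < ar s -> (ti_intersects s t <-> forall y, y \in Y -> ti_intersects s (T y))).
Proof.
  have [yL [hyL mL]] := set_max (fun y => al (T y)) hY.
  have [yR [hyR mR]] := set_max (fun y => - ar (T y)) hY.
  move: mL mR => /= mL mR.
  set L := al (T yL) in mL *. set Rr := ar (T yR) in mR *.
  have pL := hpos _ hyL. have pR := hpos _ hyR.
  have LR : L <= Rr.
    case: (eqVneq yL yR) => [e|/eqP ne]; first by rewrite /L /Rr e; lia.
    have := hcl _ _ hyL hyR ne; rewrite (inter_nf pL pR) /CS => h.
    have := mL _ hyR; have := mR _ hyL => h1 h2; dh; lia.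
  case: (Z.le_lteq L Rr) => [/(_ LR) [hLR|eLR] _].
  -
    have [xlt [xl1 xl2]] := @pick_type2 V (fun y => y \in Y /\ al (T y) = L)
       (fun y => xl (T y)) yL (conj hyL erefl).
    have [xrt [xr1 xr2]] := @pick_type2 V (fun y => y \in Y /\ ar (T y) = Rr)
       (fun y => xr (T y)) yR (conj hyR erefl).
    have fact : forall y, y \in Y -> al (T y) <= L /\ Rr <= ar (T y) /\ al (T y) < ar (T y) /\
      (al (T y) = L -> c xlt <> 0 -> c (xl (T y)) = c xlt) /\
      (ar (T y) = Rr -> c xrt <> 0 -> c (xr (T y)) = c xrt).
      move=> y hy; split; first exact: mL.
      split; first by have := mR _ hy; lia.
      split; first exact: hpos.
      split.
      + move=> e hn; apply/ceq; apply: xl1 => //; by move=> E; rewrite E in hn.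
      + move=> e hn; apply/ceq; apply: xr1 => //; by move=> E; rewrite E in hn.
    have ht : al (TI xlt L xrt Rr) < ar (TI xlt L xrt Rr) by [].
    exists (TI xlt L xrt Rr); split; first by rewrite /ti_wf /=; lia.
    split; first by left => /=; lia.
    split.
      move=> y hy; rewrite (cont_nf _ ht) /CS /=; have := fact y hy => h; dh;
      first [sg | case: (Z.eq_dec (al (T y)) L) => ?; case: (Z.eq_dec (ar (T y)) Rr) => ?; sg].
    move=> s hs; split.
    + move=> hst y hy; move: hst; rewrite (inter_nf hs ht) (inter_nf hs (hpos _ hy)) /CS /= => hst.
      have := fact y hy => h; dh;
      first [sg | case: (Z.eq_dec (al (T y)) L) => ?; case: (Z.eq_dec (ar (T y)) Rr) => ?; sg].
    + move=> hall.
      have [y1 [[hy1 e1] n1]] := xl2 (xr s).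
      have [y2 [[hy2 e2] n2]] := xr2 (xl s).
      move: n1 n2; rewrite /= !cne /= => n1 n2.
      rewrite (inter_nf hs ht) /CS /=.
      case: (Z_lt_le_dec (al s) Rr) => c1; case: (Z_lt_le_dec L (ar s)) => c2.
      * by left; lia.
      * have [f1 [f2 f3]] := touch_right hs (hpos _ hy1) (hall _ hy1) ltac:(lia).
        have f4 : c (xr s) = c xlt by case: (Z.eq_dec (c (xr s)) (c xlt)) => // ?; exfalso; apply: (n1 f3) => //; lia.
        right; right; right; right; right; right; split; [lia | left; lia].
      * have [f1 [f2 f3]] := touch_left hs (hpos _ hy2) (hall _ hy2) ltac:(lia).
        have f4 : c (xl s) = c xrt by case: (Z.eq_dec (c (xl s)) (c xrt)) => // ?; exfalso; apply: (n2 f3) => //; lia.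
        right; right; right; left; right; right; split; [lia | right; lia].
      * exfalso; lia.
  -
    have ne : yL <> yR by move=> e; move: eLR; rewrite /L /Rr e; lia.
    have i0 := hcl _ _ hyL hyR ne.
    move: i0; rewrite (inter_nf pL pR) /CS => i0.
    have hx : c (xl (T yL)) = c (xr (T yR)) /\ c (xl (T yL)) <> 0.
      have := mL _ hyR; have := mR _ hyL => h1 h2; dh; lia.
    clear i0.
    have [x ex] : {x | xl (T yL) = x} by exists (xl (T yL)).
    have cx : c (xl (T yL)) = c x by rewrite ex.
    rewrite cx in hx.
    have fact : forall y, y \in Y -> al (T y) <= L /\ L <= ar (T y) /\ al (T y) < ar (T y) /\
      (al (T y) = L -> c (xl (T y)) = c x) /\ (ar (T y) = L -> c (xr (T y)) = c x).
      move=> y hy; have py := hpos _ hy.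
      split; first exact: mL.
      split; first by have := mR _ hy; lia.
      split; first by [].
      split.
      + move=> e; case: (eqVneq y yR) => [ey|/eqP ney].
          by move: e; rewrite ey -/Rr; lia.
        have := hcl _ _ hy hyR ney; rewrite (inter_nf py pR) /CS => h.
        have := mL _ hyR; have := mR _ hy => h1 h2; dh; lia.
      + move=> e; case: (eqVneq y yL) => [ey|/eqP ney].
          by move: e; rewrite ey -/L; lia.
        have := hcl _ _ hy hyL ney; rewrite (inter_nf py pL) /CS => h.
        have := mL _ hy; have := mR _ hyL => h1 h2; dh; lia.
    have ht : al (TI x L x L) = ar (TI x L x L) by [].
    exists (TI x L x L); split; first by rewrite /ti_wf /=; lia.
    split.
      right => /=; split=> //; split=> //; move=> E; move: hx; rewrite E /=; lia.
    split.
      move=> y hy; rewrite (cont_nf0 _ ht) /CN /=; have := fact y hy => h; dh;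
      first [sg | case: (Z.eq_dec (al (T y)) L) => ?; case: (Z.eq_dec (ar (T y)) L) => ?; sg].
    move=> s hs; split.
    + move=> hst y hy; move: hst; rewrite (inter_nf0 hs ht) (inter_nf hs (hpos _ hy)) /CS /CN /= => hst.
      have := fact y hy => h; dh;
      first [sg | case: (Z.eq_dec (al (T y)) L) => ?; case: (Z.eq_dec (ar (T y)) L) => ?; sg].
    + move=> hall.
      rewrite (inter_nf0 hs ht) /CS /CN /=.
      case: (Z_lt_le_dec (al s) L) => c1; case: (Z_lt_le_dec L (ar s)) => c2.
      * by left; left; lia.
      * have [f1 [f2 f3]] := touch_right hs pL (hall _ hyL) ltac:(lia).
        right; right; right; right; right; split; [lia | right; lia].
      * have [f1 [f2 f3]] := touch_left hs pR (hall _ hyR) ltac:(lia).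
        right; right; left; right; right; split; [lia | left; lia].
      * exfalso; lia.
Qed.

Lemma nf_cases s t : al s < ar s -> al t < ar t -> ti_intersects s t ->
  (exists k, al s <= k /\ k + 1 <= ar s /\ al t <= k /\ k + 1 <= ar t) \/
  (exists z g, z <> Tnone /\ ((z = xl s /\ g = al s) \/ (z = xr s /\ g = ar s)) /\
     ((z = xl t /\ g = al t) \/ (z = xr t /\ g = ar t))).
Proof.
  move=> hs ht hi.
  case: (Z_lt_le_dec (al t) (ar s)) => c1; case: (Z_lt_le_dec (al s) (ar t)) => c2.
  - by left; exists (Z.max (al s) (al t)); lia.
  - have [f1 [f2 f3]] := touch_left hs ht hi c2.
    right; exists (xl s), (al s); split; first by move=> E; rewrite E in f3.
    split; first by left.
    by right; split => //; apply/ceq.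
  - have [f1 [f2 f3]] := touch_right hs ht hi c1.
    right; exists (xr s), (ar s); split; first by move=> E; rewrite E in f3.
    split; first by right.
    by left; split => //; apply/ceq.
  - exfalso; lia.
Qed.

Lemma nf_back s t : al s < ar s -> al t < ar t ->
  ((exists k, al s <= k /\ k + 1 <= ar s /\ al t <= k /\ k + 1 <= ar t) \/
  (exists z g, z <> Tnone /\ ((z = xl s /\ g = al s) \/ (z = xr s /\ g = ar s)) /\
     ((z = xl t /\ g = al t) \/ (z = xr t /\ g = ar t)))) -> ti_intersects s t.
Proof.
  move=> hs ht [[k hk]|[z [g [hz [h1 h2]]]]].
  - by rewrite (inter_nf hs ht); left; lia.
  - rewrite (inter_nf hs ht) /CS.
    move/cne: hz => /= hz.
    case: h1 => [[/ceq e1 e1']|[/ceq e1 e1']]; case: h2 => [[/ceq e2 e2']|[/ceq e2 e2']]; sg.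
Qed.

Lemma side_eq z w a y : side_ok z a y -> side_ok w a y -> z = w /\ z <> Tnone.
Proof. by case: z; case: w => //=; lia. Qed.

Lemma G1 P Q a : two_bends P -> two_bends Q -> in_index P a -> in_index Q a ->
  ti_intersects (tproj P a) (tproj Q a) -> exists e, path_has P e /\ path_has Q e.
Proof.
  move=> hP hQ iP iQ hi.
  have [p1 [p2 [p3 [p4 p5]]]] := tproj_spec hP iP.
  have [q1 [q2 [q3 [q4 q5]]]] := tproj_spec hQ iQ.
  case: (nf_cases p1 q1 hi) => [[k hk]|[z [g [hz [h1 h2]]]]].
  - exists (HE k a); split; [apply/p2|apply/q2]; lia.
  - exists (vedge z g a); split.
    + case: h1 => [[e1 e2]|[e1 e2]]; subst z g; [exact: p4 hz|exact: p5 hz].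
    + case: h2 => [[e1 e2]|[e1 e2]]; rewrite e1 e2; rewrite e1 in hz; [exact: q4 hz|exact: q5 hz].
Qed.

Lemma G2 P Q a : two_bends P -> two_bends Q -> in_index P a -> in_index Q a ->
  (forall r, in_index P r -> r = a \/ ~ in_index Q r) ->
  (exists e, path_has P e /\ path_has Q e) -> ti_intersects (tproj P a) (tproj Q a).
Proof.
  move=> hP hQ iP iQ hr [e [eP eQ]].
  have [p1 [p2 [p3 [p4 p5]]]] := tproj_spec hP iP.
  have [q1 [q2 [q3 [q4 q5]]]] := tproj_spec hQ iQ.
  apply: (nf_back p1 q1).
  case: e eP eQ => [x r|x y] eP eQ.
  - have ir : in_index P r by exists x.
    case: (hr r ir) => [er|nr]; last by exfalso; apply: nr; exists x.
    subst r; left; exists x; move/p2: eP; move/q2: eQ; lia.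
  - right.
    case: (p3 x y eP) => [[ex sx]|[ex sx]]; case: (q3 x y eQ) => [[ex' sx']|[ex' sx']];
      have [ez nz] := side_eq sx sx'.
    + by exists (xl (tproj P a)), x; split=> //; split; [left|left; rewrite ez]; split.
    + by exists (xl (tproj P a)), x; split=> //; split; [left|right; rewrite ez]; split.
    + by exists (xr (tproj P a)), x; split=> //; split; [right|left; rewrite ez]; split.
    + by exists (xr (tproj P a)), x; split=> //; split; [right|right; rewrite ez]; split.
Qed.

Lemma self_inter s : al s < ar s -> ti_intersects s s.
Proof. by move=> hs; left; exists (al s); lia. Qed.

Theorem lemma4 (V : finType) (R : V -> path2)
  (HR : forall v, two_bends (R v))
  (a : Z) (Y : {set V})
  (HY0 : Y != set0)
  (HYa : forall y, y \in Y -> in_index (R y) a)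
  (Hclique : forall y y', y \in Y -> y' \in Y -> y <> y' ->
     ti_intersects (tproj (R y) a) (tproj (R y') a)) :
  exists t : tint,
    ti_wf t /\ ti_proper t /\
    (forall y, y \in Y -> ti_contains (tproj (R y) a) t) /\
    (forall u : V,
       ((forall r, in_index (R u) r <-> r = a) \/
        (exists c : Z, (forall r, in_index (R u) r <-> (r = a \/ r = c)) /\
           (forall y, y \in Y -> ~ in_index (R y) c))) ->
       ((forall v, v \in Y -> v <> u -> adjacent R u v) <->
        ti_intersects (tproj (R u) a) t)).
Proof.
  have hpos : forall y, y \in Y -> al (tproj (R y) a) < ar (tproj (R y) a).
    by move=> y hy; case: (tproj_spec (HR y) (HYa y hy)).
  have [t [ht1 [ht2 [ht3 ht4]]]] := helly (T := fun y => tproj (R y) a) HY0 hpos Hclique.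
  exists t; split=> //; split=> //; split=> //.
  move=> u Hu.
  have iu : in_index (R u) a by case: Hu => [H|[cc [H _]]]; apply/H; [|left].
  have hr : forall y, y \in Y -> forall r, in_index (R u) r -> r = a \/ ~ in_index (R y) r.
    move=> y hy r; case: Hu => [H|[cc [H H']]] /H; first by left.
    by case=> [->|->]; [left|right; apply: H'].
  have pu : al (tproj (R u) a) < ar (tproj (R u) a) by case: (tproj_spec (HR u) iu).
  rewrite (ht4 _ pu); split.
  - move=> hadj y hy; case: (eqVneq y u) => [->|/eqP ne]; first exact: self_inter.
    apply: (G2 (HR u) (HR y) iu (HYa y hy) (hr y hy)).
    by case: (hadj y hy ne).
  - move=> hall v hv ne; split; first by move=> e; apply: ne.
    exact: (G1 (HR u) (HR v) iu (HYa v hv) (hall v hv)).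
Qed.
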